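(* For positive integers $p,q,r,s,t,u$, the transition maps satisfy: (1) $T^{p,q,r}_{s,t,u}:\Lambda^{p,q,r}\to\Lambda^{s,t,u}$ is well-defined; (2) $T^{p,q,r}_{s,t,u}$ is order-preserving; (3) $T^{s,t,u}_{p,q,r}\circ T^{p,q,r}_{s,t,u}\le\mathrm{id}_{\Lambda^{p,q,r}}$ (pointwise); (4) $T^{s,t,u}_{p,q,r}\circ T^{p,q,r}_{s,t,u}=\mathrm{id}_{\Lambda^{p,q,r}}$ if $p\le s$, $q\le t$ and $r\le u$; (5) $(T^{p,q,r}_{s,t,u})^{-1}(0)=\{0\}$ if each of the pairs $(p,s),(q,t),(r,u)$ lies in $\{(1,1)\}\cup(\mathbb{N}_{\ge2})^2$.
   Context: $\mathbb{N}=\{0,1,2,\dots\}$. For positive integers $p,q,r$, $\Lambda^{p,q,r}=\langle a,b,c\mid pa+qb=rc\rangle$ is the quotient of the free commutative monoid $\mathbb{N}a\oplus\mathbb{N}b\oplus\mathbb{N}c$ by the congruence generated by $\lambda+pa+qb\sim\lambda+rc$; it is ordered by $\lambda\le\mu$ iff $\lambda+\nu=\mu$ for some $\nu\in\Lambda^{p,q,r}$. The transition function $\tau^p_q:\mathbb{N}\to\mathbb{N}$ is $\tau^p_q(mp+n)=mq+\min\{n,q-1\}$ ($m\in\mathbb{N}$, $0\le n<p$). The transition map $T^{p,q,r}_{s,t,u}:\Lambda^{p,q,r}\to\Lambda^{s,t,u}$ is $T^{p,q,r}_{s,t,u}(ma+nb+kc)=\tau^p_s(m)a+\tau^q_t(n)b+\tau^r_u(k)c$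 for $m,n,k\in\mathbb{N}$. For maps $f,g$ into a poset, $f\le g$ means $f(x)\le g(x)$ for all $x$. *)

(* Defs.v *)
From Stdlib Require Import Arith Relations.

(* Elements of the free commutative monoid Na (+) Nb (+) Nc, as triples (m,n,k)
   standing for m a + n b + k c. *)
Definition triple := (nat * nat * nat)%type.

Definition tadd (x y : triple) : triple :=
  let '(m1, n1, k1) := x in let '(m2, n2, k2) := y in (m1 + m2, n1 + n2, k1 + k2).

Definition lam_step (p q r : nat) (x y : triple) : Prop :=
  exists l : triple, x = tadd l (p, q, 0) /\ y = tadd l (0, 0, r).

(* The congruence generated (equivalence closure of a translation-invariant
   relation; this is the congruence defining Lambda^{p,q,r}). *)
Definition lam_eq (p q r : nat) : relation triple :=
  clos_refl_sym_trans triple (lam_step p q r).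

Definition lam_le (p q r : nat) (x y : triple) : Prop :=
  exists nu : triple, lam_eq p q r (tadd x nu) y.

Definition tau (p q x : nat) : nat :=
  (x / p) * q + Nat.min (x mod p) (q - 1).

Definition T (p q r s t u : nat) (x : triple) : triple :=
  let '(m, n, k) := x in (tau p s m, tau q t n, tau r u k).

Definition good_pair (p s : nat) : Prop :=
  (p = 1 /\ s = 1) \/ (2 <= p /\ 2 <= s).

(* Main.v *)
Require Import Defs.
From Stdlib Require Import Arith Relations Lia.

Lemma tau_spec p q a b : 0 < p -> b < p -> tau p q (a*p+b) = a*q + Nat.min b (q-1).
Proof.
  intros Hp Hb. unfold tau.
  assert (E1 : (a*p+b)/p = a) by (symmetry; apply (Nat.div_unique _ _ _ b); lia).
  assert (E2 : (a*p+b) mod p = b) by (symmetry; apply (Nat.mod_unique _ _ a); lia).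
  rewrite E1, E2. reflexivity.
Qed.

Lemma decomp p x : 0 < p -> exists a b, b < p /\ x = a*p+b.
Proof.
  intros Hp. exists (x/p), (x mod p). split.
  - apply Nat.mod_upper_bound; lia.
  - rewrite (Nat.div_mod x p) at 1 by lia. lia.
Qed.

Lemma tau_shift p q x : 0 < p -> tau p q (x+p) = tau p q x + q.
Proof.
  intros Hp. destruct (decomp p x Hp) as [a [b [Hb ->]]].
  replace (a*p+b+p) with ((a+1)*p+b) by lia.
  rewrite !tau_spec by lia. lia.
Qed.

Lemma tau_mono p q x y : 0 < p -> 0 < q -> x <= y -> tau p q x <= tau p q y.
Proof.
  intros Hp Hq Hxy.
  destruct (decomp p x Hp) as [a [b [Hb ->]]].
  destruct (decomp p y Hp) as [a' [b' [Hb' ->]]].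
  rewrite !tau_spec by lia.
  assert (a <= a') by nia.
  destruct (Nat.eq_dec a a') as [<-|Hne].
  - assert (b <= b') by lia. lia.
  - assert (a + 1 <= a') by lia.
    assert ((a+1)*q <= a'*q) by nia. lia.
Qed.

Lemma tau_back p s x : 0 < p -> 0 < s ->
  tau s p (tau p s x) <= x /\ (p <= s -> tau s p (tau p s x) = x).
Proof.
  intros Hp Hs. destruct (decomp p x Hp) as [a [b [Hb ->]]].
  rewrite tau_spec by lia. rewrite tau_spec by lia. lia.
Qed.

Lemma tau_zero p s x : 0 < p -> 0 < s -> good_pair p s -> (tau p s x = 0 <-> x = 0).
Proof.
  intros Hp Hs Hg. destruct (decomp p x Hp) as [a [b [Hb ->]]].
  rewrite tau_spec by lia. unfold good_pair in Hg. nia.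
Qed.

Lemma zero_class p q r x y : 0 < p -> 0 < r -> lam_eq p q r x y ->
  (x = (0,0,0) <-> y = (0,0,0)).
Proof.
  intros Hp Hr H. induction H as [x y [[[m n] k] [-> ->]]| | |].
  - cbn [tadd]. split; intros E; inversion E; lia.
  - tauto.
  - tauto.
  - tauto.
Qed.

Lemma part1 p q r s t u : 0 < p -> 0 < q -> 0 < r ->
  forall x y, lam_eq p q r x y -> lam_eq s t u (T p q r s t u x) (T p q r s t u y).
Proof.
  intros Hp Hq Hr x y H. induction H as [x y [[[m n] k] [-> ->]]| | |].
  - apply rst_step. exists (T p q r s t u (m,n,k)). cbn [tadd T].
    rewrite ?Nat.add_0_r, ?Nat.add_0_l, !tau_shift by lia. split; reflexivity.
  - apply rst_refl.
  - apply rst_sym; assumption.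
  - eapply rst_trans; eassumption.
Qed.

Theorem proposition3p3 (p q r s t u : nat) :
  0 < p -> 0 < q -> 0 < r -> 0 < s -> 0 < t -> 0 < u ->
  (* (1) well-defined on the quotient *)
  (forall x y, lam_eq p q r x y -> lam_eq s t u (T p q r s t u x) (T p q r s t u y)) /\
  (* (2) order-preserving *)
  (forall x y, lam_le p q r x y -> lam_le s t u (T p q r s t u x) (T p q r s t u y)) /\
  (* (3) T' o T <= id *)
  (forall x, lam_le p q r (T s t u p q r (T p q r s t u x)) x) /\
  (* (4) T' o T = id when p <= s, q <= t, r <= u *)
  (p <= s -> q <= t -> r <= u ->
     forall x, lam_eq p q r (T s t u p q r (T p q r s t u x)) x) /\
  (* (5) T^{-1}(0) = {0} *)
  (good_pair p s -> good_pair q t -> good_pair r u ->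
     forall x, lam_eq s t u (T p q r s t u x) (0, 0, 0) <-> lam_eq p q r x (0, 0, 0)).
Proof.
  intros Hp Hq Hr Hs Ht Hu.
  split; [|split; [|split; [|split]]].
  - apply part1; assumption.
  - intros [[m n] k] y [[[a b] c] H].
    apply (part1 p q r s t u Hp Hq Hr) in H.
    exists (tau p s (m+a) - tau p s m, tau q t (n+b) - tau q t n, tau r u (k+c) - tau r u k).
    cbn [tadd T] in *.
    assert (tau p s m <= tau p s (m+a)) by (apply tau_mono; lia).
    assert (tau q t n <= tau q t (n+b)) by (apply tau_mono; lia).
    assert (tau r u k <= tau r u (k+c)) by (apply tau_mono; lia).
    replace (tau p s m + (tau p s (m + a) - tau p s m)) with (tau p s (m+a)) by lia.
    replace (tau q t n + (tau q t (n + b) - tau q t n)) with (tau q t (n+b)) by lia.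
    replace (tau r u k + (tau r u (k + c) - tau r u k)) with (tau r u (k+c)) by lia.
    exact H.
  - intros [[m n] k]. cbn [T].
    destruct (tau_back p s m Hp Hs) as [H1 _].
    destruct (tau_back q t n Hq Ht) as [H2 _].
    destruct (tau_back r u k Hr Hu) as [H3 _].
    exists (m - tau s p (tau p s m), n - tau t q (tau q t n), k - tau u r (tau r u k)).
    cbn [tadd].
    replace (tau s p (tau p s m) + (m - tau s p (tau p s m))) with m by lia.
    replace (tau t q (tau q t n) + (n - tau t q (tau q t n))) with n by lia.
    replace (tau u r (tau r u k) + (k - tau u r (tau r u k))) with k by lia.
    apply rst_refl.
  - intros H1 H2 H3 [[m n] k]. cbn [T].
    rewrite (proj2 (tau_back p s m Hp Hs) H1), (proj2 (tau_back q t n Hq Ht) H2),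
      (proj2 (tau_back r u k Hr Hu) H3).
    apply rst_refl.
  - intros G1 G2 G3 [[m n] k]. split; intros H.
    + apply zero_class in H; [|lia|lia]. destruct H as [_ H0].
      specialize (H0 eq_refl). cbn [T] in H0. injection H0 as E1 E2 E3.
      rewrite (proj1 (tau_zero p s m Hp Hs G1) E1), (proj1 (tau_zero q t n Hq Ht G2) E2),
        (proj1 (tau_zero r u k Hr Hu G3) E3).
      apply rst_refl.
    + apply zero_class in H; [|lia|lia]. destruct H as [_ H].
      specialize (H eq_refl). injection H as -> -> ->. cbn [T].
      unfold tau. rewrite !Nat.div_0_l, !Nat.mod_0_l by lia. cbn. apply rst_refl.
Qed.
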